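(* Let $T=(V,E)$ be a tree with labeled leaves $1,\dots,n$, let $(\theta_e)_{e\in E}$ be edge weights in $[-1,1]$, and let $\theta'$ be a weight vector that differs from $\theta$ only on one edge $e'$. Then $\mathrm{TV}(\Pr_{T,\theta}[x],\Pr_{T,\theta'}[x])\le|\theta'_{e'}-\theta_{e'}|/2$.
   Context: For a tree $T$ with edge weights $\theta_e\in[-1,1]$, the Ising model assigns spins $x_v\in\{-1,1\}$ to all nodes with probability $\propto\prod_{(u,v)\in E}\frac{1+\theta_{uv}x_ux_v}{2}$; $\Pr_{T,\theta}[x]$ denotes the induced marginal distribution of the spins $x=(x_1,\dots,x_n)$ of the leaves. $\mathrm{TV}(\mu,\nu)=\frac12\sum_x|\mu(x)-\nu(x)|$. *)

(* Defs.v *)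
From mathcomp Require Import all_boot all_order all_algebra.
Set Implicit Arguments. Unset Strict Implicit. Unset Printing Implicit Defensive.
Import Order.TTheory GRing.Theory Num.Theory.
Local Open Scope ring_scope.

Section IsingTree.
Variables (R : realFieldType) (V : finType).

Definition is_tree (e : rel V) : Prop :=
  symmetric e /\ irreflexive e /\
  (forall u v : V, connect e u v) /\
  (forall c : seq V, uniq c -> (2 < size c)%N -> ~~ cycle e c).

Definition is_leaf (e : rel V) (v : V) : bool := #|[set w | e v w]| == 1%N.

Definition spin (b : bool) : R := if b then 1 else -1.

(* Edge weights are indexed by unordered edges {u,v} : {set V}.
   Each undirected edge is enumerated once via the ordering enum_rank u < enum_rank v. *)
Definition ising_weight (e : rel V) (theta : {set V} -> R) (sigma : {ffun V -> bool}) : R :=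
  \prod_(p : V * V | e p.1 p.2 && (enum_rank p.1 < enum_rank p.2)%N)
     ((1 + theta [set p.1; p.2] * spin (sigma p.1) * spin (sigma p.2)) / 2).

Definition ising_Z (e : rel V) (theta : {set V} -> R) : R :=
  \sum_(sigma : {ffun V -> bool}) ising_weight e theta sigma.

Definition leaf_marginal (n : nat) (e : rel V) (lab : 'I_n -> V)
  (theta : {set V} -> R) (x : {ffun 'I_n -> bool}) : R :=
  (\sum_(sigma : {ffun V -> bool} | [forall i, sigma (lab i) == x i])
      ising_weight e theta sigma) / ising_Z e theta.

End IsingTree.

Definition TV (R : realFieldType) (T : finType) (mu nu : T -> R) : R :=
  2^-1 * \sum_(x : T) `|mu x - nu x|.

(* Main.v *)
Require Import Defs.
From mathcomp Require Import all_boot all_order all_algebra lra ring.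
Import Order.TTheory GRing.Theory Num.Theory.

Lemma cut_exists (V : finType) (e : rel V) (a b : V) :
  is_tree e -> e a b ->
  exists C : {set V}, [/\ b \in C, a \notin C &
    forall u v, e u v -> [set u; v] != [set a; b] -> (u \in C) = (v \in C)].
Proof.
move=> [esym [eirr [_ eacyc]]] eab.
pose e' := [rel u v | e u v && ([set u; v] != [set a; b])].
have e'sym : forall u v, e' u v -> e' v u.
  by move=> u v /andP[euv ne]; rewrite /= esym euv setUC.
exists [set v | connect e' b v]; split.
- by rewrite inE connect0.
- rewrite inE; apply/negP => /connectP[p pp].
  case: (shortenP pp) => p' pp' up' _ lp'.
  have ab : a != b by apply/negP => /eqP Eab; move: eab; rewrite Eab eirr.
  suff [H1 H2] : (2 < size (b :: p'))%N /\ cycle e (b :: p').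
    by move: (eacyc _ up' H1); rewrite H2.
  apply: conj.
    case: p' pp' up' lp' => [|x [|y q]] //=.
    - by move=> _ _ Ea; move: ab; rewrite Ea eqxx.
    - by move=> pp1 _ Ea; move: pp1; rewrite -Ea /= setUC eqxx !andbF.
  rewrite /cycle rcons_path (sub_path _ pp') /=; last by move=> u v /andP[].
  by rewrite -lp'.
- move=> u v euv ne; rewrite !inE.
  have h1 : e' u v by rewrite /= euv ne.
  apply/idP/idP => h.
    by apply: (connect_trans h); apply: connect1.
  by apply: (connect_trans h); apply: connect1; apply: e'sym.
Qed.

Local Open Scope ring_scope.

Lemma spinN (R : realFieldType) x : spin R (~~ x) = - spin R x.
Proof. by case: x; rewrite /spin /= ?opprK. Qed.

Lemma spin_sq (R : realFieldType) x : spin R x * spin R x = 1.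
Proof. by case: x; rewrite /spin /= ?mulrNN mulr1. Qed.

Lemma normr_spin (R : realFieldType) x : `|spin R x| = 1.
Proof. by case: x; rewrite /spin ?normrN normr1. Qed.

Lemma set2_pair (V : finType) (u v a b : V) : u != v ->
  [set u; v] == [set a; b] -> (u == a) && (v == b) || (u == b) && (v == a).
Proof.
move=> uv /eqP E; move: uv.
have : u \in [set a; b] by rewrite -E set21.
have : v \in [set a; b] by rewrite -E set22.
by rewrite !inE => /orP[]/eqP-> /orP[]/eqP->; rewrite ?eqxx ?orbT ?andbT.
Qed.

Theorem lemma12 (R : realFieldType) (V : finType) (n : nat) (e : rel V)
  (lab : 'I_n -> V) (theta theta' : {set V} -> R) (a b : V) :
  is_tree e ->
  injective lab ->
  (forall v : V, (v \in codom lab) = is_leaf e v) ->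
  (forall u v : V, e u v -> -1 <= theta [set u; v] <= 1) ->
  (forall u v : V, e u v -> -1 <= theta' [set u; v] <= 1) ->
  e a b ->
  (forall u v : V, e u v -> [set u; v] != [set a; b] ->
     theta' [set u; v] = theta [set u; v]) ->
  TV (leaf_marginal e lab theta) (leaf_marginal e lab theta')
    <= `|theta' [set a; b] - theta [set a; b]| / 2.
Proof.
move=> tree _ _ hth _ eab hth'.
have [C [bC aC cut]] := @cut_exists V e a b tree eab.
have [esym [eirr _]] := tree.
have ab : a != b by apply/negP => /eqP Eab; move: eab; rewrite Eab eirr.
pose P := fun p : V * V => e p.1 p.2 && (enum_rank p.1 < enum_rank p.2)%N.
pose Q := fun p : V * V => [set p.1; p.2] == [set a; b].
pose f (th : {set V} -> R) (s : {ffun V -> bool}) (p : V * V) :=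
  (1 + th [set p.1; p.2] * spin R (s p.1) * spin R (s p.2)) / 2.
pose Wr s := \prod_(p | P p && ~~ Q p) f theta s p.
pose sg (s : {ffun V -> bool}) := spin R (s a) * spin R (s b).
have HW : forall th, (forall u v, e u v -> [set u; v] != [set a; b] ->
     th [set u; v] = theta [set u; v]) ->
   forall s, ising_weight e th s = Wr s * ((1 + th [set a; b] * sg s) / 2).
  move=> th hth1 s; rewrite /ising_weight (bigID Q) /= mulrC; congr (_ * _).
    apply: eq_bigr => p /andP[/andP[ep _] nQ].
    by rewrite /f hth1.
  have Qp : forall p, P p && Q p -> (p.1 == a) && (p.2 == b) || (p.1 == b) && (p.2 == a).
    move=> p /andP[/andP[ep _] qp]; apply: set2_pair qp.
    by apply/negP => /eqP E; move: ep; rewrite E eirr.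
  have [lt|ge] := ltnP (enum_rank a) (enum_rank b).
    rewrite (big_pred1 (a, b)) /=; first by rewrite mulrA.
    case=> x y /=; apply/idP/idP.
      move=> H; have := Qp (x, y) H; case/orP=> /andP[/eqP /= ex /eqP /= ey]; first by rewrite ex ey.
      move: H; rewrite /P ex ey /= => /andP[/andP[_ H] _].
      by move: (ltn_trans H lt); rewrite ltnn.
    case/eqP=> -> ->; by rewrite /P /Q /= eab lt eqxx.
  have lt : (enum_rank b < enum_rank a)%N.
    rewrite ltn_neqAle ge andbT; apply/negP => /eqP/val_inj/enum_rank_inj E.
    by move: ab; rewrite E eqxx.
  rewrite (big_pred1 (b, a)) /=; first by rewrite setUC mulrA -[_ * spin R (s a)]mulrA [spin R (s b) * _]mulrC mulrA.
  case=> x y /=; apply/idP/idP.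
    move=> H; have := Qp (x, y) H; case/orP=> /andP[/eqP /= ex /eqP /= ey]; last by rewrite ex ey.
      move: H; rewrite /P ex ey /= => /andP[/andP[_ H] _].
      by move: (ltn_trans H lt); rewrite ltnn.
  case/eqP=> -> ->; by rewrite /P /Q /= esym eab lt setUC eqxx.
pose phi (s : {ffun V -> bool}) : {ffun V -> bool} :=
  [ffun v => if v \in C then ~~ s v else s v].
have phiK : involutive phi.
  by move=> s; apply/ffunP => v; rewrite !ffunE; case: (v \in C); rewrite ?negbK.
have Wphi : forall s, Wr (phi s) = Wr s.
  move=> s; apply: eq_bigr => p /andP[/andP[ep _] nQ].
  rewrite /f !ffunE -(cut _ _ ep nQ).
  by case: ifP => _ //; rewrite !spinN; ring.
have sgphi : forall s, sg (phi s) = - sg s.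
  by move=> s; rewrite /sg !ffunE bC (negbTE aC) spinN mulrN.
have S0 : \sum_s Wr s * sg s = 0.
  have E : \sum_s Wr s * sg s = - \sum_s Wr s * sg s.
    rewrite {1}(reindex_inj (can_inj phiK)) /= -sumrN.
    by apply: eq_bigr => s _; rewrite Wphi sgphi mulrN.
  lra.
have HZ : forall th, (forall u v, e u v -> [set u; v] != [set a; b] ->
     th [set u; v] = theta [set u; v]) -> ising_Z e th = \sum_s Wr s / 2.
  move=> th hth1; rewrite /ising_Z.
  transitivity (\sum_s (Wr s / 2 + th [set a; b] / 2 * (Wr s * sg s))).
    by apply: eq_bigr => s _; rewrite (HW th hth1); ring.
  by rewrite big_split /= -mulr_sumr S0 mulr0 addr0.
have Wr0 : forall s, 0 <= Wr s.
  move=> s; apply: prodr_ge0 => p /andP[/andP[ep _] _].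
  have := hth _ _ ep; rewrite /f.
  case: (s p.1); case: (s p.2); rewrite /spin => /andP[h1 h2]; lra.
have EX : forall g : {ffun V -> bool} -> R,
  \sum_(x : {ffun 'I_n -> bool}) \sum_(s : {ffun V -> bool} | [forall i, s (lab i) == x i]) g s
  = \sum_s g s.
  move=> g; under eq_bigr => x _ do rewrite big_mkcond.
  rewrite exchange_big /=; apply: eq_bigr => s _.
  rewrite -big_mkcond (big_pred1 [ffun i => s (lab i)]) // => x /=.
  apply/forallP/eqP => [H|->].
    by apply/ffunP => i; rewrite ffunE; apply/eqP; rewrite eq_sym; apply: H.
  by move=> i; rewrite ffunE.
rewrite /TV /leaf_marginal (HZ theta (fun _ _ _ _ => erefl)) (HZ theta' hth').
set Z := \sum_s Wr s / 2.
have Z0 : 0 <= Z by apply: sumr_ge0 => s _; apply: divr_ge0 (Wr0 s) _.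
have [Zeq|Zne] := eqVneq Z 0.
  rewrite Zeq invr0 big1 ?mulr0 ?divr_ge0 //.
  by move=> x _; rewrite !mulr0 subrr normr0.
have Zpos : 0 < Z by rewrite lt_def Zne Z0.
have Zi : 0 < Z^-1 by rewrite invr_gt0.
set D := `|theta' [set a; b] - theta [set a; b]|.
have bound : \sum_(x : {ffun 'I_n -> bool}) `|(\sum_(s : {ffun V -> bool} | [forall i, s (lab i) == x i]) ising_weight e theta s) / Z
     - (\sum_(s : {ffun V -> bool} | [forall i, s (lab i) == x i]) ising_weight e theta' s) / Z| <= D.
  apply: (@le_trans _ _ (\sum_(x : {ffun 'I_n -> bool}) \sum_(s : {ffun V -> bool} | [forall i, s (lab i) == x i]) (Wr s * (D / 2) / Z))).
    apply: ler_sum => x _.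
    rewrite -mulrBl -sumrB normrM (gtr0_norm Zi) -mulr_suml.
    apply: ler_wpM2r; first exact: ltW Zi.
    apply: (le_trans (ler_norm_sum _ _ _)); apply: ler_sum => s _.
    have -> : ising_weight e theta s - ising_weight e theta' s
        = Wr s * sg s * ((theta [set a; b] - theta' [set a; b]) / 2).
      by rewrite (HW theta (fun _ _ _ _ => erefl)) (HW theta' hth'); ring.
    rewrite !normrM ?/sg ?normrM !normr_spin mulr1 (ger0_norm (Wr0 s)).
    by rewrite distrC /D normfV (ger0_norm (ler0n R 2)) mulr1.
  rewrite EX -mulr_suml.
  have -> : \sum_s Wr s * (D / 2) = D * Z.
    by rewrite /Z mulr_sumr; apply: eq_bigr => s _; ring.
  by rewrite -mulrA mulfV ?mulr1.
move: bound; set X := \sum_x _ => bound.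
have D0 : 0 <= D by apply: normr_ge0.
lra.
Qed.
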